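(* Let $L$ and $K$ be complete lattices and suppose $L$ is a parametrisation of $K$ through a family $(f_i:L\to K)_{i\in I}$. Let $O:L\to L$ be an operator and $A$ an approximator of $O$ such that both $O$ and $A$ respect each $f_i$, and let $(x,y)$ be the $A$-well-founded fixpoint of $O$. Then: (1) for each $i\in I$, $(f_i(x),f_i(y))$ is the $A_{f_i}$-well-founded fixpoint of $O_{f_i}$; (2) if the $A_{f_i}$-well-founded fixpoint of $O_{f_i}$ is exact for every $i\in I$, then the $A$-well-founded fixpoint of $O$ is exact.
   Context: $L$ is a parametrisation of $K$ through $(f_i)_{i\in I}$ if each $f_i:L\to K$ is a surjective lattice morphism (i.e. $f_i(\bigvee X)=\bigvee f_i(X)$ and $f_i(\bigwedge X)=\bigwedge f_i(X)$ for all $X\subseteq L$) and for all $x,y\in L$: $x\leq y$ iff $f_i(x)\leq f_i(y)$ for all $i\in I$. $L^2$ carries the precision order $(x,y)\leq_p(u,v)$ iff $x\leq u$ and $v\leq y$; $(x,y)_1=x,(x,y)_2=y$; a pair $(x,y)$ is exact if $x=y$. An approximator of $O$ is a $\leq_p$-monotone $A:L^2\to L^2$ with $A(x,x)_1\leq O(x)\leq A(x,x)_2$ for all $x$, assumed symmetric ($A(x,y)_1=A(y,x)_2$). $O$ respects $f$ if $f(x)=f(y)$ implies $f(O(x))=f(O(y))$; $O_f$ is the unique operator with $O_f\circ f=f\circ O$. With $f^2(x,y)=(f(x),f(y))$, $A$ respects $f$ if $f^2(p)=f^2(q)$ implies $f^2(A(p))=f^2(A(q))$, and $A_f$ is the unique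 operator with $A_f\circ f^2=f^2\circ A$. For an operator $B$ on $M^2$ and $P$ on $M$, a partial $B$-stable fixpoint is $(x,y)$ with $x=\mathrm{lfp}(B(\cdot,y)_1)$, $y=\mathrm{lfp}(B(x,\cdot)_2)$; the $B$-well-founded fixpoint of $P$ is the $\leq_p$-least partial $B$-stable fixpoint. *)

(* Defs.v *)
Set Implicit Arguments.

Record complete_lattice := CompleteLattice {
  carrier :> Type;
  le : carrier -> carrier -> Prop;
  sup : (carrier -> Prop) -> carrier;
  inf : (carrier -> Prop) -> carrier;
  le_refl : forall x, le x x;
  le_trans : forall x y z, le x y -> le y z -> le x z;
  le_antisym : forall x y, le x y -> le y x -> x = y;
  sup_ub : forall (X : carrier -> Prop) x, X x -> le x (sup X);
  sup_least : forall (X : carrier -> Prop) z, (forall x, X x -> le x z) -> le (sup X) z;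
  inf_lb : forall (X : carrier -> Prop) x, X x -> le (inf X) x;
  inf_greatest : forall (X : carrier -> Prop) z, (forall x, X x -> le z x) -> le z (inf X)
}.

Arguments le {c} _ _.
Arguments sup {c} _.
Arguments inf {c} _.

Definition image {A B : Type} (f : A -> B) (X : A -> Prop) : B -> Prop :=
  fun b => exists a, X a /\ f a = b.

Definition lattice_morphism {L K : complete_lattice} (f : L -> K) : Prop :=
  (forall X : L -> Prop, f (sup X) = sup (image f X)) /\
  (forall X : L -> Prop, f (inf X) = inf (image f X)).

Definition surjective {A B : Type} (f : A -> B) : Prop := forall b, exists a, f a = b.

Definition parametrisation {L K : complete_lattice} {I : Type} (f : I -> L -> K) : Prop :=
  (forall i, surjective (f i) /\ lattice_morphism (f i)) /\
  (forall x y : L, le x y <-> (forall i, le (f i x) (f i y))).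

Definition le_p {L : complete_lattice} (p q : L * L) : Prop :=
  le (fst p) (fst q) /\ le (snd q) (snd p).

Definition exact {L : Type} (p : L * L) : Prop := fst p = snd p.

Definition approximator {L : complete_lattice} (O : L -> L) (A : L * L -> L * L) : Prop :=
  (forall p q, le_p p q -> le_p (A p) (A q)) /\
  (forall x, le (fst (A (x, x))) (O x) /\ le (O x) (snd (A (x, x)))) /\
  (forall x y, fst (A (x, y)) = snd (A (y, x))).

Definition respects {L K : Type} (f : L -> K) (O : L -> L) : Prop :=
  forall x y, f x = f y -> f (O x) = f (O y).

Definition f2 {L K : Type} (f : L -> K) (p : L * L) : K * K := (f (fst p), f (snd p)).

Definition respects2 {L K : Type} (f : L -> K) (A : L * L -> L * L) : Prop :=
  forall p q, f2 f p = f2 f q -> f2 f (A p) = f2 f (A q).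

(** Of is O_f, i.e. Of o f = f o O (unique since f is surjective). *)
Definition is_induced_op {L K : Type} (f : L -> K) (O : L -> L) (Of : K -> K) : Prop :=
  forall x, Of (f x) = f (O x).

Definition is_induced_approx {L K : Type} (f : L -> K) (A : L * L -> L * L)
  (Af : K * K -> K * K) : Prop :=
  forall p, Af (f2 f p) = f2 f (A p).

Definition is_lfp {M : complete_lattice} (g : M -> M) (x : M) : Prop :=
  g x = x /\ forall z, g z = z -> le x z.

Definition partial_stable {M : complete_lattice} (B : M * M -> M * M) (p : M * M) : Prop :=
  is_lfp (fun z => fst (B (z, snd p))) (fst p) /\
  is_lfp (fun z => snd (B (fst p, z))) (snd p).

(** p is the B-well-founded fixpoint of P: the <=_p-least partial B-stable fixpoint.
    (The operator P only enters through B being an approximator of it.) *)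
Definition well_founded_fixpoint {M : complete_lattice} (B : M * M -> M * M)
  (P : M -> M) (p : M * M) : Prop :=
  partial_stable B p /\ forall q, partial_stable B q -> le_p p q.

(* Main.v *)
Require Import Defs.
From Stdlib Require Import Setoid.
Set Implicit Arguments.

Definition lfp {M : complete_lattice} (g : M -> M) : M := inf (fun z => le (g z) z).

Definition monotone {M N : complete_lattice} (g : M -> N) :=
  forall a b, le a b -> le (g a) (g b).

Lemma lfp_spec (M : complete_lattice) (g : M -> M) : monotone g ->
  is_lfp g (lfp g) /\ forall p, le (g p) p -> le (lfp g) p.
Proof.
  intros Hg.
  assert (H1 : forall p, le (g p) p -> le (lfp g) p)
    by (intros p Hp; apply (inf_lb _ (fun z => le (g z) z)); exact Hp).
  assert (H2 : le (g (lfp g)) (lfp g)).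
  { apply inf_greatest. intros z Hz. eapply le_trans. apply Hg. apply H1. exact Hz. exact Hz. }
  assert (H3 : le (lfp g) (g (lfp g))). { apply H1. apply Hg. exact H2. }
  split; [split|]; auto.
  - apply le_antisym; auto.
  - intros z Hz. apply H1. rewrite Hz. apply le_refl.
Qed.

Lemma lfp_unique (M : complete_lattice) (g : M -> M) a b :
  is_lfp g a -> is_lfp g b -> a = b.
Proof.
  intros [Ha1 Ha2] [Hb1 Hb2]. apply le_antisym; auto.
Qed.

Lemma lfp_le_prefix (M : complete_lattice) (g : M -> M) x p :
  monotone g -> is_lfp g x -> le (g p) p -> le x p.
Proof.
  intros Hg Hx Hp. destruct (lfp_spec Hg) as [Hl Hl2].
  rewrite (lfp_unique Hx Hl). auto.
Qed.

Lemma sup2 (L K : complete_lattice) (f : L -> K)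
  (Hsup : forall X, f (sup X) = sup (image f X)) (Hf : monotone f) (a b : L) :
  le (f a) (f b) ->
  f (sup (fun t => t = a \/ t = b)) = f b /\ le a (sup (fun t => t = a \/ t = b))
  /\ le b (sup (fun t => t = a \/ t = b)).
Proof.
  intros Hab.
  assert (Ha : le a (sup (fun t => t = a \/ t = b))) by (apply sup_ub; left; reflexivity).
  assert (Hb : le b (sup (fun t => t = a \/ t = b))) by (apply sup_ub; right; reflexivity).
  repeat split; auto.
  apply le_antisym.
  - rewrite Hsup. apply sup_least. intros t [u [[-> | ->] <-]]; auto. apply le_refl.
  - apply Hf. exact Hb.
Qed.

Lemma transfer (L K : complete_lattice) (f : L -> K) (g : L -> L) (gK : K -> K) x :
  (forall X, f (sup X) = sup (image f X)) -> surjective f -> monotone f -> monotone g ->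
  (forall z, gK (f z) = f (g z)) -> is_lfp g x -> is_lfp gK (f x).
Proof.
  intros Hsup Hsurj Hf Hg Hc Hx. destruct Hx as [Hx1 Hx2]. split.
  - rewrite Hc, Hx1; reflexivity.
  - intros k Hk.
    pose (z0 := sup (fun z => le (f z) k)).
    assert (Hz0 : le (f z0) k).
    { unfold z0; rewrite Hsup. apply sup_least. intros t [a [Ha <-]]. exact Ha. }
    destruct (Hsurj k) as [w Hw].
    assert (Hle : le (f z0) (f w)) by (rewrite Hw; exact Hz0).
    destruct (sup2 Hsup Hf _ _ Hle) as [Hw' [Hz0w _]].
    assert (Hgz : le (g z0) z0).
    { apply (sup_ub _ (fun z => le (f z) k)).
      eapply le_trans. apply Hf, Hg, Hz0w.
      rewrite <- Hc, Hw', Hw, Hk. apply le_refl. }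
    eapply le_trans; [| exact Hz0]. apply Hf.
    eapply lfp_le_prefix; [exact Hg | split; [exact Hx1 | exact Hx2] | exact Hgz].
Qed.

Definition pmono {M : complete_lattice} (B : M * M -> M * M) :=
  forall p q, le_p p q -> le_p (B p) (B q).

Definition C1 {M : complete_lattice} (B : M * M -> M * M) (y : M) :=
  lfp (fun z => fst (B (z, y))).
Definition C2 {M : complete_lattice} (B : M * M -> M * M) (x : M) :=
  lfp (fun z => snd (B (x, z))).
Definition D {M : complete_lattice} (B : M * M -> M * M) (z : M) := C1 B (C2 B z).

Lemma mono1 (M : complete_lattice) (B : M * M -> M * M) y :
  pmono B -> monotone (fun z => fst (B (z, y))).
Proof.
  intros HB a b Hab. apply (HB (a, y) (b, y)). split; simpl; [exact Hab | apply le_refl].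
Qed.

Lemma mono2 (M : complete_lattice) (B : M * M -> M * M) x :
  pmono B -> monotone (fun z => snd (B (x, z))).
Proof.
  intros HB a b Hab. apply (HB (x, b) (x, a)). split; simpl; [apply le_refl | exact Hab].
Qed.

Lemma C1_anti (M : complete_lattice) (B : M * M -> M * M) y1 y2 :
  pmono B -> le y1 y2 -> le (C1 B y2) (C1 B y1).
Proof.
  intros HB H. destruct (lfp_spec (mono1 y2 HB)) as [_ Hp]. apply Hp.
  destruct (lfp_spec (mono1 y1 HB)) as [[Hf _] _].
  assert (E : fst (B (C1 B y1, y1)) = C1 B y1) by exact Hf.
  eapply le_trans; [ apply (HB (C1 B y1, y2) (C1 B y1, y1)); split; simpl; [apply le_refl | exact H] | ].
  simpl. rewrite E; apply le_refl.
Qed.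

Lemma C2_anti (M : complete_lattice) (B : M * M -> M * M) x1 x2 :
  pmono B -> le x1 x2 -> le (C2 B x2) (C2 B x1).
Proof.
  intros HB H. destruct (lfp_spec (mono2 x2 HB)) as [_ Hp]. apply Hp.
  destruct (lfp_spec (mono2 x1 HB)) as [[Hf _] _].
  assert (E : snd (B (x1, C2 B x1)) = C2 B x1) by exact Hf.
  eapply le_trans; [ apply (HB (x1, C2 B x1) (x2, C2 B x1)); split; simpl; [exact H | apply le_refl] | ].
  simpl. rewrite E; apply le_refl.
Qed.

Lemma D_mono (M : complete_lattice) (B : M * M -> M * M) : pmono B -> monotone (D B).
Proof.
  intros HB a b H. unfold D. apply C1_anti; auto. apply C2_anti; auto.
Qed.

Lemma C1_eq (M : complete_lattice) (B : M * M -> M * M) {x y} :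
  pmono B -> is_lfp (fun z => fst (B (z, y))) x -> x = C1 B y.
Proof. intros HB H. apply (lfp_unique H). apply (lfp_spec (mono1 y HB)). Qed.

Lemma C2_eq (M : complete_lattice) (B : M * M -> M * M) {x y} :
  pmono B -> is_lfp (fun z => snd (B (x, z))) y -> y = C2 B x.
Proof. intros HB H. apply (lfp_unique H). apply (lfp_spec (mono2 x HB)). Qed.

Lemma ps_D (M : complete_lattice) (B : M * M -> M * M) a b :
  pmono B -> partial_stable B (a, b) -> D B a = a /\ b = C2 B a.
Proof.
  intros HB [H1 H2]. simpl in *.
  pose proof (C1_eq HB H1) as E1. pose proof (C2_eq HB H2) as E2.
  split; auto. unfold D. rewrite <- E2. symmetry; exact E1.
Qed.

Lemma wf_lfp (M : complete_lattice) (B : M * M -> M * M) P x y :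
  pmono B -> well_founded_fixpoint B P (x, y) -> is_lfp (D B) x.
Proof.
  intros HB [Hps Hl]. destruct (ps_D HB Hps) as [E1 E2]. split; auto.
  intros z Hz.
  assert (Hs : partial_stable B (z, C2 B z)).
  { split; simpl.
    - unfold D in Hz. set (w := C2 B z) in *.
      assert (E : z = C1 B w) by (symmetry; exact Hz). clearbody w. rewrite E.
      apply (lfp_spec (mono1 _ HB)).
    - apply (lfp_spec (mono2 _ HB)). }
  exact (proj1 (Hl _ Hs)).
Qed.

Theorem theorem3p6 (L K : complete_lattice) (I : Type) (f : I -> L -> K)
  (O : L -> L) (A : L * L -> L * L)
  (Of : I -> K -> K) (Af : I -> K * K -> K * K) (x y : L) :
  parametrisation f ->
  approximator O A ->
  (forall i, respects (f i) O) ->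
  (forall i, respects2 (f i) A) ->
  (forall i, is_induced_op (f i) O (Of i)) ->
  (forall i, is_induced_approx (f i) A (Af i)) ->
  well_founded_fixpoint A O (x, y) ->
  (forall i, well_founded_fixpoint (Af i) (Of i) (f i x, f i y)) /\
  ((forall i (p : K * K), well_founded_fixpoint (Af i) (Of i) p -> exact p) ->
   exact (x, y)).
Proof.
  intros [Hpar Hrefl] Happ Hresp Hresp2 Hop Hind Hwf.
  assert (Hmono : forall i, monotone (f i)) by (intros i a b H; exact (proj1 (Hrefl a b) H i)).
  assert (HA : pmono A) by exact (proj1 Happ).
  assert (part1 : forall i, well_founded_fixpoint (Af i) (Of i) (f i x, f i y)).
  { intro i. destruct (Hpar i) as [Hsurj [Hsup _]].
    assert (HAf : pmono (Af i)).
    { intros [k1 k2] [k3 k4] [H13 H42]. simpl in *.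
      destruct (Hsurj k1) as [a1 <-]. destruct (Hsurj k2) as [a2 <-].
      destruct (Hsurj k3) as [a3 <-]. destruct (Hsurj k4) as [a4 <-].
      destruct (sup2 Hsup (Hmono i) _ _ H13) as [E3 [H1 _]].
      destruct (sup2 Hsup (Hmono i) _ _ H42) as [E2 [H4 _]].
      rewrite <- E3, <- E2.
      change (f i a1, f i (sup (fun t => t = a4 \/ t = a2))) with
        (f2 (f i) (a1, sup (fun t => t = a4 \/ t = a2))).
      change (f i (sup (fun t => t = a1 \/ t = a3)), f i a4) with
        (f2 (f i) (sup (fun t => t = a1 \/ t = a3), a4)).
      rewrite !Hind.
      destruct (HA (a1, sup (fun t => t = a4 \/ t = a2))
                   (sup (fun t => t = a1 \/ t = a3), a4)) as [G1 G2].
      { split; simpl; auto. }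
      split; simpl; apply Hmono; auto. }
    assert (Hc1 : forall w z, fst (Af i (f i z, f i w)) = f i (fst (A (z, w)))).
    { intros w z. change (f i z, f i w) with (f2 (f i) (z, w)). rewrite Hind. reflexivity. }
    assert (Hc2 : forall w z, snd (Af i (f i w, f i z)) = f i (snd (A (w, z)))).
    { intros w z. change (f i w, f i z) with (f2 (f i) (w, z)). rewrite Hind. reflexivity. }
    assert (K1 : forall w, C1 (Af i) (f i w) = f i (C1 A w)).
    { intro w. symmetry. apply (C1_eq HAf).
      exact (transfer _ Hsup Hsurj (Hmono i) (mono1 w HA) (Hc1 w) (proj1 (lfp_spec (mono1 w HA)))). }
    assert (K2 : forall w, C2 (Af i) (f i w) = f i (C2 A w)).
    { intro w. symmetry. apply (C2_eq HAf).
      exact (transfer _ Hsup Hsurj (Hmono i) (mono2 w HA) (Hc2 w) (proj1 (lfp_spec (mono2 w HA)))). }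
    assert (KD : forall w, D (Af i) (f i w) = f i (D A w)).
    { intro w. unfold D. rewrite K2, K1. reflexivity. }
    pose proof (wf_lfp HA Hwf) as HxD.
    destruct Hwf as [[Hx1 Hy1] Hleast]. simpl in *.
    split.
    - split; simpl.
      + exact (transfer _ Hsup Hsurj (Hmono i) (mono1 y HA) (Hc1 y) Hx1).
      + exact (transfer _ Hsup Hsurj (Hmono i) (mono2 x HA) (Hc2 x) Hy1).
    - intros [k1 k2] Hk. destruct (ps_D HAf Hk) as [Ek1 Ek2].
      assert (Hfx : is_lfp (D (Af i)) (f i x)).
      { exact (transfer _ Hsup Hsurj (Hmono i) (D_mono HA) KD HxD). }
      assert (Hx : le (f i x) k1) by (apply (proj2 Hfx); exact Ek1).
      split; simpl; auto.
      rewrite Ek2. rewrite (C2_eq HA Hy1), <- K2. apply C2_anti; auto. }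
  split; auto.
  intros H. unfold exact; simpl.
  assert (E : forall i, f i x = f i y) by (intro i; exact (H i _ (part1 i))).
  apply le_antisym; apply Hrefl; intro i; rewrite E; apply le_refl.
Qed.
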